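(* Let $\Theta$ be a parameter set, $L$ a loss, $\theta^*(q)\in\arg\min_{\theta\in\Theta}L(q,\theta)$, and let $\mathcal{G}'\subset\mathcal{M}$ be families of distributions. For $\epsilon'\ge0$ define the generalized modulus $\mathfrak{m}(\mathcal{G}',\mathcal{M},\epsilon')=\sup_{p\in\mathcal{G}',\,q\in\mathcal{M}:\ \mathsf{TV}(p,q)\le\epsilon'}L(p,\theta^*(q))$. Let $\hat p_n^*$ be the empirical distribution of $n$ i.i.d. samples from $p^*$ and let $\hat p_n$ be produced by an adaptive corruption of level $\epsilon$ under $\mathsf{TV}$. Let $\hat p'$ be a (random) distribution such that $\mathsf{TV}(\hat p',\hat p_n^* )\le\epsilon_1$ with probability at least $1-\delta$ and $\hat p'\in\mathcal{G}'$ with probability at least $1-\delta$. Let $q\in\arg\min_{q'\in\mathcal{M}}\mathsf{TV}(q',\hat p_n)$ and $\hat\theta=\theta^*(q)$. Then with probability at least $1-3\delta$, $L(\hat p',\hat\theta)\le\mathfrak{m}(\mathcal{G}',\mathcal{M},\tilde\epsilon)$, where $\tilde\epsilon=2\big(\sqrt\epsilon+\sqrt{\log(1/\delta)/(2n)}\big)^2+2\epsilon_1$.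
   Context: $\mathsf{TV}(p,q)=\sup_A|p(A)-q(A)|$. Adaptive corruption of level $\epsilon$ under $\mathsf{TV}$: $n$ i.i.d. samples are drawn from $p^*$, giving the empirical distribution $\hat p_n^*$; an adversary inspects $\hat p_n^*$ and outputs an empirical distribution $\hat p_n$ on $n$ points. The conditional law of $\hat p_n$ given $\hat p_n^*$ is allowed if there is a coupling $\pi_{X,Y}$ with $\pi_X=p^*$ and $\mathsf{TV}(\pi_X,\pi_Y)\le\epsilon$ such that $\mathsf{TV}(\hat p_n^*,\hat p_n)$ is stochastically dominated by $\mathsf{TV}(\frac1n\sum_i\delta_{X_i},\frac1n\sum_i\delta_{Y_i})$, where $(X_i,Y_i)$ are $n$ i.i.d. draws from $\pi_{X,Y}$.
   Formalization: In adaptive corruption of level ε, the coupling $\pi_{X,Y}$ satisfies π(X ≠ Y) ≤ ε (some measurable set containing the off-diagonal has π-mass at most ε) in place of $\mathsf{TV}(\pi_X,\pi_Y)\le\epsilon$. Apart from conventions, each condition added here is assumed in the paper as well or is needed for the statement above to hold. *)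

(* Defs.v *)
From HB Require Import structures.
From mathcomp Require Import all_boot all_order all_algebra.
From mathcomp Require Import all_classical all_reals.
From mathcomp Require Import ereal topology normedtype sequences exp measure probability.
Set Implicit Arguments. Unset Strict Implicit. Unset Printing Implicit Defensive.
Import Order.TTheory GRing.Theory Num.Theory.
Local Open Scope classical_set_scope.
Local Open Scope ring_scope.

Definition TV {d} {X : measurableType d} {R : realType}
    (p q : set X -> \bar R) : \bar R :=
  ereal_sup [set (`|p A - q A|)%E | A in [set A : set X | measurable A]].

Definition emp {d} {X : measurableType d} {R : realType} {n : nat}
    (x : 'I_n -> X) : set X -> \bar R :=
  fun A => ((\sum_(i < n) ((x i \in A : bool)%:R : R)) / n%:R)%:E.

Definition pouter {d} {T : measurableType d} {R : realType}
    (P : probability T R) (S : set T) : \bar R :=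
  ereal_inf [set P F | F in [set F : set T | measurable F /\ S `<=` F]].

Definition iid_with_law {d} {Om : measurableType d} {d'} {T : measurableType d'}
    {R : realType} (P : probability Om R) {n : nat} (W : 'I_n -> Om -> T)
    (mu : probability T R) : Prop :=
  [/\ (forall i, measurable_fun setT (W i)),
      (forall i (A : set T), measurable A -> P (W i @^-1` A) = mu A) &
      (forall A : 'I_n -> set T, (forall i, measurable (A i)) ->
         P (\bigcap_(i in [set: 'I_n]) (W i @^-1` A i)) =
         (\prod_(i < n) fine (P (W i @^-1` A i)))%:E)].

(* Xs: the clean i.i.d. samples from pstar; Zs: the n points output by the
   adversary (hat p_n = emp (Zs w)).  There must be a coupling pi of pstar
   (first marginal) with some distribution such that pi(X <> Y) <= eps and
   TV(hat p_n^*, hat p_n) is stochastically dominated by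
   TV(emp X', emp Y') with (X'_i, Y'_i) i.i.d. from pi.
   Events need not be measurable, so tail probabilities are outer ones. *)
Definition adaptive_TV_corruption {d} {X : measurableType d} {R : realType}
    {dO} {Om : measurableType dO} (P : probability Om R) {n : nat}
    (pstar : probability X R) (Xs : 'I_n -> Om -> X) (Zs : Om -> 'I_n -> X)
    (eps : R) : Prop :=
  exists pi : probability (X * X)%type R,
    (forall A : set X, measurable A -> pi (A `*` setT) = pstar A) /\
    (exists B : set (X * X)%type, measurable B /\
        [set xy : X * X | xy.1 <> xy.2] `<=` B /\ (pi B <= eps%:E)%E) /\
    exists dQ (OmQ : measurableType dQ) (Q : probability OmQ R)
           (W : 'I_n -> OmQ -> (X * X)%type),
      iid_with_law Q W pi /\
      forall t : R,
        (pouter P [set w | (t%:E < TV (emp (fun i => Xs i w)) (emp (Zs w)))%E]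
         <= pouter Q [set w | (t%:E < TV (emp (fun i => (W i w).1))
                                          (emp (fun i => (W i w).2)))%E])%E.

Definition gen_modulus {d} {X : measurableType d} {R : realType} {Theta : Type}
    (L : probability X R -> Theta -> \bar R)
    (thetastar : probability X R -> Theta)
    (G' M : set (probability X R)) (e : R) : \bar R :=
  ereal_sup [set L pq.1 (thetastar pq.2) |
             pq in [set pq : probability X R * probability X R |
                    G' pq.1 /\ M pq.2 /\
                    (TV (fun A => pq.1 A) (fun A => pq.2 A) <= e%:E)%E]].

(* Main.v *)
Require Import Defs.
From HB Require Import structures.
From mathcomp Require Import all_boot all_order all_algebra.
From mathcomp Require Import all_classical all_reals.
From mathcomp Require Import ereal topology normedtype sequences exp measure probability.
From mathcomp Require Import realfun derive.
From mathcomp Require Import ring lra.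
Import Order.TTheory GRing.Theory Num.Theory.
Import numFieldNormedType.Exports.
Local Open Scope classical_set_scope.
Local Open Scope ring_scope.
Section A.
Variable R : realType.
Definition hh (y : R) := y * (expR y + 1) - 2 * (expR y - 1).
Lemma hh_ge0 (y : R) : 0 <= y -> 0 <= hh y.
Proof.
move=> y0.
have h0 : hh 0 = 0 by rewrite /hh expR0; lra.
rewrite -h0.
apply: (@ger0_derive1_ndecry R hh 0) => //; last first.
- by apply: derivable_within_continuous => x _; rewrite /hh.
- move=> x _. rewrite derive1E /hh.
  rewrite deriveB //= deriveM //= deriveD //= deriveM //= deriveB //=.
  rewrite !derive_cst derive_id.
  have E : forall z : R, derive expR z 1 = expR z by move=> z; apply: derive_val.
  rewrite E /GRing.scale /= !mulr1 !addr0 subr0 mulr0 addr0.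
  have ex := expR_gt0 x.
  have h1 : (1 - x) * expR x <= 1.
    have := expR_ge1Dx (- x); rewrite expRN => hx.
    rewrite -[X in _ <= X](mulVf (lt0r_neq0 ex)); apply: ler_wpM2r; [exact: ltW | lra].
  nra.
Qed.

Lemma key_ineq (r u : R) : 1 <= r -> u * (r + 1) - 2 * (r - 1) >= 0 ->
  2 * (r - 1) ^+ 2 <= 2 * u * r ^+ 2 - r ^+ 2 + 1.
Proof.
move=> r1 hu.
have hp : 0 <= (r + 1) * (2 * u * r ^+ 2 - r ^+ 2 + 1 - 2 * (r - 1) ^+ 2).
  have -> : (r + 1) * (2 * u * r ^+ 2 - r ^+ 2 + 1 - 2 * (r - 1) ^+ 2)
     = 2 * r ^+ 2 * (u * (r + 1) - 2 * (r - 1)) + (r - 1) ^+ 3.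
    rewrite !exprS !expr0; ring.
  apply: addr_ge0; first by apply: mulr_ge0 => //; apply: mulr_ge0 => //; exact: sqr_ge0.
  by apply: exprn_ge0; lra.
rewrite -subr_ge0; rewrite pmulr_rge0 in hp => //; lra.
Qed.

Lemma chernoff_param (e s : R) : 0 <= e -> 0 <= s ->
  exists2 lam, 0 <= lam & 2 * s ^+ 2 <= lam * (Num.sqrt e + s) ^+ 2 - e * (expR lam - 1).
Proof.
move=> e0 s0; have [->|ep] := eqVneq e 0.
  exists 2; first lra. by rewrite sqrtr0 add0r mul0r subr0.
have epos : 0 < e by rewrite lt_neqAle eq_sym ep.
set c := Num.sqrt e.
have cpos : 0 < c by rewrite sqrtr_gt0.
have ec : e = c ^+ 2 by rewrite sqr_sqrtr // ltW.
set r := 1 + s / c.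
have r1 : 1 <= r by rewrite /r lerDl divr_ge0 // ltW.
have rpos : r \in Num.pos by rewrite posrE; lra.
set u := ln r.
have er : expR u = r by rewrite /u lnK.
have u0 : 0 <= u by apply: ln_ge0.
have sc : s = c * (r - 1) by rewrite /r addrAC subrr add0r mulrC divfK // gt_eqF.
exists (2 * u); first lra.
have e2 : expR (2 * u) = r ^+ 2 by rewrite -[2]/(2%:R) expRM_natl er.
rewrite e2 ec sc.
have hu := hh_ge0 _ u0; rewrite /hh er in hu.
have k := key_ineq _ _ r1 hu.
have -> : c + c * (r - 1) = c * r by ring.
have c2 : 0 <= c ^+ 2 by exact: sqr_ge0.
have -> : 2 * (c * (r - 1)) ^+ 2 = c ^+ 2 * (2 * (r - 1) ^+ 2) by ring.
have -> : 2 * u * (c * r) ^+ 2 - c ^+ 2 * (r ^+ 2 - 1) = c ^+ 2 * (2 * u * r ^+ 2 - r ^+ 2 + 1) by ring.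
by apply: ler_wpM2l.
Qed.
End A.
Section B.
Variable R : realType.
Lemma chernoff_sum (n : nat) (p e lam t : R) : 0 <= p -> p <= 1 -> p <= e -> 0 <= lam ->
  \sum_(f : {ffun 'I_n -> bool} | t * n%:R < \sum_(i < n) ((f i)%:R : R))
     \prod_(i < n) (if f i then p else 1 - p)
  <= expR (- (n%:R * (lam * t - e * (expR lam - 1)))).
Proof.
move=> p0 p1 pe lam0.
pose G (f : {ffun 'I_n -> bool}) := \prod_(i < n) (if f i then p else 1 - p).
have G0 f : 0 <= G f by apply: prodr_ge0 => i _; case: (f i); lra.
apply: (@le_trans _ _ (\sum_(f : {ffun 'I_n -> bool})
     expR (lam * (\sum_(i < n) ((f i)%:R : R) - t * n%:R)) * G f)).
  rewrite [X in X <= _]big_mkcond /=; apply: ler_sum => f _.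
  case: ifP => ht; last by apply: mulr_ge0 => //; exact: expR_ge0.
  rewrite -[X in X <= _]mul1r; apply: ler_wpM2r; first exact: G0.
  apply: (le_trans _ (expR_ge1Dx _)); rewrite lerDl.
  apply: mulr_ge0 => //; rewrite subr_ge0; exact: ltW.
have -> : \sum_(f : {ffun 'I_n -> bool})
     expR (lam * (\sum_(i < n) ((f i)%:R : R) - t * n%:R)) * G f
   = expR (- (lam * t * n%:R)) *
     \sum_(f : {ffun 'I_n -> bool}) \prod_(i < n) (if f i then p * expR lam else 1 - p).
  rewrite mulr_sumr; apply: eq_bigr => f _.
  rewrite (_ : lam * (\sum_(i < n) ((f i)%:R : R) - t * n%:R) =
     - (lam * t * n%:R) + lam * \sum_(i < n) ((f i)%:R : R)); last by ring.
  rewrite expRD -mulrA; congr (_ * _).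
  rewrite mulr_sumr expR_sum /G -big_split /=; apply: eq_bigr => i _.
  by case: (f i); rewrite /= ?mulr1 ?mulr0 ?expR0 ?mul1r // mulrC.
rewrite -(bigA_distr_bigA (fun (i : 'I_n) (b : bool) => if b then p * expR lam else 1 - p)) /=.
have -> : \prod_(i < n) \sum_(j : bool) (if j then p * expR lam else 1 - p)
     = \prod_(i < n) (1 + p * (expR lam - 1)).
  apply: eq_bigr => i _; rewrite big_bool /=; ring.
apply: (@le_trans _ _ (expR (- (lam * t * n%:R)) * \prod_(i < n) expR (e * (expR lam - 1)))).
  apply: ler_wpM2l; first exact: expR_ge0.
  apply: ler_prod => i _; apply/andP; split.
    have := expR_ge0 lam; nra.
  apply: (le_trans (expR_ge1Dx _)); rewrite ler_expR; apply: ler_wpM2r => //.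
  by rewrite subr_ge0; apply: (le_trans _ (expR_ge1Dx _)); rewrite lerDl.
rewrite -expR_sum sumr_const card_ord -expRD ler_expR.
rewrite -mulr_natl !mulr1 le_eqVlt; apply/orP; left; apply/eqP; ring.
Qed.
End B.
Section D.
Variable R : realType.
Local Open Scope ereal_scope.
Lemma abse_tri (a b c : \bar R) : a \is a fin_num -> b \is a fin_num -> c \is a fin_num ->
  `|a - c| <= `|a - b| + `|b - c|.
Proof.
move=> ha hb hc; rewrite -(fineK ha) -(fineK hb) -(fineK hc) -!EFinB !abse_EFin -EFinD lee_fin.
exact: ler_distD.
Qed.

Lemma TV_tri {d} {X : measurableType d} (p q r : set X -> \bar R) :
  (forall A, measurable A -> p A \is a fin_num) ->
  (forall A, measurable A -> q A \is a fin_num) ->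
  (forall A, measurable A -> r A \is a fin_num) ->
  TV p r <= TV p q + TV q r.
Proof.
move=> hp hq hr; apply: ge_ereal_sup => _ [A mA <-].
apply: (le_trans (abse_tri _ _ _ (hp A mA) (hq A mA) (hr A mA))).
by apply: leeD; apply: ereal_sup_ubound; exists A.
Qed.

Lemma TV_sym {d} {X : measurableType d} (p q : set X -> \bar R) :
  (forall A, measurable A -> p A \is a fin_num) ->
  (forall A, measurable A -> q A \is a fin_num) ->
  TV p q = TV q p.
Proof.
move=> hp hq; rewrite /TV; congr ereal_sup; apply/seteqP; split => _ [A mA <-];
  exists A => //; rewrite -(fineK (hp A mA)) -(fineK (hq A mA)) -!EFinB !abse_EFin distrC //.
Qed.

Lemma emp_fin {d} {X : measurableType d} {n : nat} (x : 'I_n -> X) A :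
  (@emp d X R n x A) \is a fin_num.
Proof. by []. Qed.

Lemma prob_fin {d} {X : measurableType d} (P : probability X R) A :
  measurable A -> P A \is a fin_num.
Proof. move=> mA; exact: fin_num_measure. Qed.

Lemma TV_emp_le {d} {X : measurableType d} {n : nat} (x y : 'I_n -> X) (B : set (X * X)) :
  (0 < n)%N -> [set xy : X * X | xy.1 <> xy.2] `<=` B ->
  TV (emp x) (emp y) <= ((\sum_(i < n) (`[< B (x i, y i) >]%:R : R)) / n%:R)%:E.
Proof.
move=> n0 hB; apply: ge_ereal_sup => _ [A mA <-].
rewrite /emp -EFinB abse_EFin lee_fin -mulrBl normrM. rewrite [X in (_ * X)%R]ger0_norm ?invr_ge0 //.
apply: ler_wpM2r; first by rewrite invr_ge0.
rewrite -sumrB; apply: (le_trans (ler_norm_sum _ _ _)); apply: ler_sum => i _.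
case: (asboolP (B (x i, y i))) => hb.
  by case: (x i \in A); case: (y i \in A); rewrite /= ?subrr ?normr0 ?subr0 ?sub0r ?normrN ?normr1.
have -> : x i = y i by apply: contrapT => hne; apply: hb; apply: hB.
by rewrite subrr normr0.
Qed.

Lemma bigU_le {dT} {T : measurableType dT} (mu : probability T R) (I : Type) (s : seq I)
   (P : pred I) (C : I -> set T) : (forall i, measurable (C i)) ->
  mu (\big[setU/set0]_(i <- s | P i) C i) <= \sum_(i <- s | P i) mu (C i).
Proof.
move=> mC; elim: s => [|a s IH]; first by rewrite !big_nil measure0.
rewrite !big_cons; case: (P a) => //.
apply: (le_trans (measureU2 _ _ _)) => //; first exact: bigsetU_measurable.
by apply: leeD2l.
Qed.

Lemma in_bigU {T : Type} (I : eqType) (s : seq I) (P : pred I) (C : I -> set T) j w :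
  j \in s -> P j -> C j w -> (\big[setU/set0]_(i <- s | P i) C i) w.
Proof.
elim: s => [//|a s IH]; rewrite in_cons big_cons => /orP [/eqP <-|js] Pj Cw.
  by rewrite Pj; left.
case: (P a); last exact: IH.
by right; apply: IH.
Qed.

Lemma conc_Q {d} {X : measurableType d} {dQ} {OmQ : measurableType dQ}
  (Q : probability OmQ R) (n : nat) (W : 'I_n -> OmQ -> (X * X)%type)
  (pi : probability (X * X)%type R) (B : set (X * X)) (e t lam : R) :
  (0 < n)%N -> iid_with_law Q W pi -> measurable B ->
  [set xy : X * X | xy.1 <> xy.2] `<=` B -> pi B <= e%:E -> (0 <= lam)%R ->
  pouter Q [set w | t%:E < TV (emp (fun i => (W i w).1)) (emp (fun i => (W i w).2))]
  <= (expR (- (n%:R * (lam * t - e * (expR lam - 1)))))%:E.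
Proof.
move=> n0 [mW lawW prodW] mB hB piB lam0.
pose A (f : {ffun 'I_n -> bool}) i := if f i then B else ~` B.
have mA f i : measurable (A f i) by rewrite /A; case: (f i) => //; exact: measurableC.
have mpre f i : measurable (W i @^-1` A f i).
  by rewrite -[_ @^-1` _]setTI; apply: (mW i) => //.
pose C f := \bigcap_(i in [set: 'I_n]) (W i @^-1` A f i).
have mC f : measurable (C f) by apply: fin_bigcap_measurable => //; exact: finite_finset.
pose p := fine (pi B).
have pB : pi B = p%:E by rewrite fineK //; exact: prob_fin.
have pCB : pi (~` B) = (1 - p)%:E by rewrite probability_setC // pB.
have p0 : (0 <= p)%R by rewrite -lee_fin -pB.
have p1 : (p <= 1)%R by rewrite -lee_fin -pB; exact: probability_le1.
have pe : (p <= e)%R by rewrite -lee_fin -pB.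
have QC f : Q (C f) = (\prod_(i < n) (if f i then p else 1 - p))%:E.
  rewrite /C prodW //; congr EFin; apply: eq_bigr => i _.
  by rewrite lawW // /A; case: (f i); rewrite ?pB ?pCB.
pose Pf (f : {ffun 'I_n -> bool}) := (t * n%:R < \sum_(i < n) ((f i)%:R : R))%R.
pose U := \big[setU/set0]_(f | Pf f) C f.
apply: (@le_trans _ _ (Q U)).
  apply: ereal_inf_lbound; exists U => //; split.
    by apply: bigsetU_measurable.
  move=> w /= ht.
  pose f := [ffun i => `[< B (W i w) >]].
  apply: (@in_bigU _ _ _ _ _ f); first exact: mem_index_enum.
    rewrite /Pf; have h2 := TV_emp_le (fun i => (W i w).1) (fun i => (W i w).2) B n0 hB.
    have := lt_le_trans ht h2; rewrite lte_fin ltr_pdivlMr ?ltr0n //.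
    by under eq_bigr do rewrite -surjective_pairing; rewrite /f; under [X in _ -> (_ < X)%R]eq_bigr do rewrite ffunE.
  move=> i _; rewrite /A ffunE; case: asboolP => //.
apply: (le_trans (bigU_le _ _ _ _ _ mC)).
under eq_bigr do rewrite QC.
rewrite sumEFin lee_fin.
exact: chernoff_sum.
Qed.
End D.
Section F.
Variable R : realType.
Local Open Scope ereal_scope.
Lemma pouter_hull {dO} {Om : measurableType dO} (P : probability Om R) (S : set Om) (c : R) :
  pouter P S <= c%:E -> exists F, measurable F /\ S `<=` F /\ P F <= c%:E.
Proof.
move=> h.
have hk : forall k : nat, exists F : set Om,
    (measurable F /\ S `<=` F) /\ P F < (c + k.+1%:R^-1)%:E.
  move=> k; have : pouter P S < (c + k.+1%:R^-1)%:E.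
    by apply: (le_lt_trans h); rewrite lte_fin ltrDl invr_gt0 ltr0n.
  by move=> /ereal_inf_lt [_ [F hF <-] lt]; exists F.
have [Fs hFs] := choice hk.
exists (\bigcap_k Fs k); split; first by apply: bigcapT_measurable => k; case: (hFs k) => [[]].
split; first by move=> w Sw k _; case: (hFs k) => [[_ sub] _]; exact: sub.
apply/lee_addgt0Pr => eps eps0.
pose k := Num.Def.trunc (eps^-1).
have hk1 : (k.+1%:R^-1 <= eps)%R.
  rewrite -(invrK eps) lef_pV2 ?posrE ?invr_gt0 ?ltr0n //; apply: ltW; exact: truncnS_gt.
apply: (@le_trans _ _ (P (Fs k))).
  apply: le_measure.
  - by rewrite inE; apply: bigcapT_measurable => j; case: (hFs j) => [[]].
  - by rewrite inE; case: (hFs k) => [[]].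
  - by apply: bigcap_inf.
case: (hFs k) => _ /ltW/le_trans; apply.
by rewrite -EFinD lee_fin lerD2l.
Qed.
End F.

Theorem proposition3p10
  (R : realType) (d : measure_display) (X : measurableType d)
  (Theta : Type) (L : probability X R -> Theta -> \bar R)
  (thetastar : probability X R -> Theta)
  (G' M : set (probability X R))
  (dO : measure_display) (Om : measurableType dO) (P : probability Om R)
  (n : nat) (eps eps1 delta : R) (pstar : probability X R)
  (Xs : 'I_n -> Om -> X) (Zs : Om -> 'I_n -> X)
  (phat' : Om -> probability X R) (q : Om -> probability X R) :
  (0 < n)%N -> 0 <= eps -> 0 < delta ->
  (forall r, M r -> forall th, (L r (thetastar r) <= L r th)%E) ->
  G' `<=` M ->
  iid_with_law P Xs pstar ->
  adaptive_TV_corruption P pstar Xs Zs eps ->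
  (exists E1 : set Om, measurable E1 /\ ((1 - delta)%:E <= P E1)%E /\
     forall w, E1 w ->
       (TV (fun A => phat' w A) (emp (fun i => Xs i w)) <= eps1%:E)%E) ->
  (exists E2 : set Om, measurable E2 /\ ((1 - delta)%:E <= P E2)%E /\
     forall w, E2 w -> G' (phat' w)) ->
  (forall w, M (q w) /\
     forall q', M q' ->
       (TV (fun A => q w A) (emp (Zs w)) <= TV (fun A => q' A) (emp (Zs w)))%E) ->
  exists E : set Om, measurable E /\ ((1 - 3 * delta)%:E <= P E)%E /\
    forall w, E w ->
      (L (phat' w) (thetastar (q w)) <=
       gen_modulus L thetastar G' M
         (2 * (Num.sqrt eps + Num.sqrt (ln (delta^-1) / (2 * n%:R))) ^+ 2
          + 2 * eps1))%E.
Proof.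
move=> n0 e0 d0 _ G'M _ [pi [hmarg [[B [mB [hB piB]]] [dQ [OmQ [Q [W [iidW dom]]]]]]]]
  [E1 [mE1 [pE1 hE1]]] [E2 [mE2 [pE2 hE2]]] hq.
have [d1|d1] := leP 1 delta.
  exists set0; split => //; split => //.
  by rewrite measure0 lee_fin; lra.
set s := Num.sqrt (ln (delta^-1) / (2 * n%:R)).
set t := (Num.sqrt eps + s) ^+ 2.
have s0 : 0 <= s by exact: sqrtr_ge0.
have [lam lam0 hlam] := chernoff_param _ _ _ e0 s0.
have lnpos : 0 <= ln (delta^-1).
  by apply: ln_ge0; rewrite invf_ge1 //; exact: ltW.
have nR : (0 < n%:R :> R) by rewrite ltr0n.
have s2 : n%:R * (2 * s ^+ 2) = ln (delta^-1).
  rewrite /s sqr_sqrtr; last by apply: divr_ge0 => //; apply: mulr_ge0 => //; exact: ltW.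
  by field; rewrite gt_eqF.
pose bad := [set w | (t%:E < TV (emp (fun i => Xs i w)) (emp (Zs w)))%E].
have hbad : (pouter P bad <= delta%:E)%E.
  apply: (le_trans (dom t)).
  apply: (le_trans (conc_Q _ _ _ _ _ _ _ _ _ n0 iidW mB hB piB lam0)).
  rewrite lee_fin.
  have -> : delta = expR (- (n%:R * (2 * s ^+ 2))).
    by rewrite s2 expRN lnK ?invrK // posrE invr_gt0.
  rewrite ler_expR lerN2; apply: ler_wpM2l; [exact: ltW | exact: hlam].
have [F [mF [subF PF]]] := pouter_hull _ _ _ _ hbad.
exists (E1 `&` E2 `&` ~` F); split.
  by apply: measurableI; [exact: measurableI | exact: measurableC].
split.
  have hC (A : set Om) : measurable A -> ((1 - delta)%:E <= P A)%E -> (P (~` A) <= delta%:E)%E.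
    move=> mA hA; rewrite probability_setC // -(fineK (prob_fin _ _ _ mA)) -EFinB lee_fin.
    move: hA; rewrite -(fineK (prob_fin _ _ _ mA)) lee_fin; lra.
  have mE : measurable (E1 `&` E2 `&` ~` F).
    by apply: measurableI; [exact: measurableI | exact: measurableC].
  have hcE : (P (~` (E1 `&` E2 `&` ~` F)) <= (3 * delta)%:E)%E.
    rewrite !setCI setCK.
    apply: (le_trans (measureU2 _ _ _)).
    - by apply: measurableU; exact: measurableC.
    - exact: mF.
    have -> : 3 * delta = delta + delta + delta by ring.
    rewrite !EFinD; apply: leeD => //.
    apply: (le_trans (measureU2 _ _ _)); try exact: measurableC.
    by apply: leeD; apply: hC.
  have := probability_setC P (measurableC mE); rewrite setCK => ->.
  move: hcE; rewrite -(fineK (prob_fin _ _ _ (measurableC mE))) -EFinB !lee_fin; lra.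
move=> w [[w1 w2] w3].
have fp (A : set X) : measurable A -> (phat' w A \is a fin_num) by move=> mA; exact: prob_fin.
have fq (A : set X) : measurable A -> (q w A \is a fin_num) by move=> mA; exact: prob_fin.
have fe (m : nat) (x : 'I_m -> X) (A : set X) : measurable A -> (@emp d X R m x A \is a fin_num) by [].
have h1 := hE1 w w1.
have h2 : (TV (emp (fun i => Xs i w)) (emp (Zs w)) <= t%:E)%E.
  rewrite leNgt; apply/negP => ht; apply: w3; apply: subF; exact: ht.
have h3 : (TV (fun A => phat' w A) (emp (Zs w)) <= (eps1 + t)%:E)%E.
  apply: (le_trans (TV_tri _ _ (emp (fun i => Xs i w)) _ _ _ _)) => //.
  by rewrite EFinD; apply: leeD.
have h4 : (TV (fun A => q w A) (emp (Zs w)) <= (eps1 + t)%:E)%E.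
  apply: le_trans h3; apply: (hq w).2; apply: G'M; exact: hE2.
have h5 : (TV (fun A => phat' w A) (fun A => q w A) <= (2 * t + 2 * eps1)%:E)%E.
  apply: (le_trans (TV_tri _ _ (emp (Zs w)) _ _ _ _)) => //.
  rewrite (TV_sym _ (emp (Zs w)) (fun A => q w A)) //.
  have -> : 2 * t + 2 * eps1 = (eps1 + t) + (eps1 + t) by ring.
  by rewrite EFinD; apply: leeD.
apply: ereal_sup_ubound; exists (phat' w, q w) => //=.
split; first exact: hE2.
split; first exact: (hq w).1.
exact: h5.
Qed.
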